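(* Let $0<\lambda<1$, let $c>0$, and let $A \subseteq \mathbb{N}$. Suppose that $$\sum_{a \in A[x]} w(a) \sim \exp(c x^{1-\lambda}).$$ Then $$\limsup_{x \to \infty} \frac{\pi_A(x + x^\lambda) - \pi_A(x)}{x^\lambda/\log(x)} \le \frac{\exp[c(1-\lambda)] - 1}{c(1-\lambda)}.$$
   Context: Fix $0<\lambda<1$. For $c>0$ and $x>0$, define $w(x) = \frac{c(1-\lambda)\log(x)\exp(c x^{1-\lambda})}{x^\lambda}$. Here $\mathbb{N} = \{1,2,3,\dots\}$. For $A \subseteq \mathbb{N}$ and $x\in\mathbb{R}$, write $A[x] = \{a \in A : a \le x\}$ and $\pi_A(x) = \# A[x]$. $f\sim g$ means $f(x)/g(x)\to 1$ as $x\to\infty$. *)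

(* Defs.v *)
From Stdlib Require Import Reals Lra Classical ClassicalEpsilon.
From Coquelicot Require Import Coquelicot.
Open Scope R_scope.

Definition ind (A : nat -> Prop) (n : nat) : R :=
  if excluded_middle_informative (A n) then 1 else 0.

(* floor of x as a natural number (0 for x < 0) *)
Definition nfloor (x : R) : nat := Z.to_nat (Int_part x).

(* sum_{a in A, 1 <= a <= x} f a ; A is a subset of N = {1,2,...}
   (the element 0 is never counted) *)
Definition sumA (A : nat -> Prop) (f : R -> R) (x : R) : R :=
  sum_n_m (fun n => ind A n * f (INR n)) 1 (nfloor x).

Definition piA (A : nat -> Prop) (x : R) : R := sumA A (fun _ => 1) x.

Definition w (lam c x : R) : R :=
  c * (1 - lam) * ln x * exp (c * Rpower x (1 - lam)) / Rpower x lam.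

(* Main.v *)
Require Import Defs.
From Stdlib Require Import Reals Lra Lia ClassicalEpsilon.
From Coquelicot Require Import Coquelicot.
Open Scope R_scope.

Lemma exp_mono x y : x <= y -> exp x <= exp y.
Proof. intros [H|H]. left; apply exp_increasing; auto. subst; lra. Qed.
Lemma ln_mono x y : 0 < x -> x <= y -> ln x <= ln y.
Proof. intros Hx [H|H]. left; apply ln_increasing; auto. subst; lra. Qed.

Lemma mono (f df : R->R) a b : a <= b ->
  (forall t, a <= t <= b -> is_derive f t (df t)) ->
  (forall t, a <= t <= b -> 0 <= df t) -> f a <= f b.
Proof.
intros Hab Hd Hp.
destruct (MVT_gen f a b df) as [z [Hz Heq]].
- intros t Ht. apply Hd. rewrite Rmin_left in Ht by lra. rewrite Rmax_right in Ht by lra. lra.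
- intros t Ht. rewrite Rmin_left in Ht by lra. rewrite Rmax_right in Ht by lra.
  apply derivable_continuous_pt. exists (df t). apply is_derive_Reals. apply Hd; lra.
- rewrite Rmin_left in Hz by lra. rewrite Rmax_right in Hz by lra.
  assert (0 <= df z * (b - a)) by (apply Rmult_le_pos; [apply Hp; lra| lra]). lra.
Qed.

Lemma exp_split t l : 0 < t -> exp ((1 - l) * ln t) = t * exp (- l * ln t).
Proof. intros. replace ((1-l) * ln t) with (ln t + - l * ln t) by ring.
rewrite exp_plus, exp_ln; auto. Qed.

(* concavity *)
Lemma conc l x : 0 < l < 1 -> 0 < x ->
  Rpower (x + Rpower x l) (1 - l) <= Rpower x (1 - l) + (1 - l).
Proof.
intros Hl Hx. unfold Rpower.
set (g := fun t => (1 - l) * exp (- l * ln x) * t - exp ((1 - l) * ln t)).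
assert (Hpos : 0 < exp (l * ln x)) by apply exp_pos.
assert (H := mono g (fun t => (1 - l) * exp (- l * ln x) - (1 - l) * exp (- l * ln t)) x (x + exp (l * ln x))).
assert (Hg : g x <= g (x + exp (l * ln x))).
{ apply H. lra.
  - intros t Ht. unfold g. auto_derive. lra.
    rewrite exp_split by lra. field. lra.
  - intros t Ht. assert (exp (- l * ln t) <= exp (- l * ln x)).
    { apply exp_mono. apply Rmult_le_compat_neg_l. lra. apply ln_mono; lra. }
    nra. }
unfold g in Hg.
assert (exp (- l * ln x) * exp (l * ln x) = 1).
{ rewrite <- exp_plus. replace (- l * ln x + l * ln x) with 0 by ring. apply exp_0. }
nra.
Qed.

Lemma w_mono l c : 0 < l < 1 -> 0 < c -> exists T, 2 <= T /\
  forall x y, T <= x -> x <= y -> w l c x <= w l c y.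
Proof.
intros Hl Hc.
set (M := l / (c * (1 - l) * (1 - l))).
exists (Rmax 2 (exp M)). split. apply Rmax_l.
set (h := fun t => c * exp ((1 - l) * ln t) - l * ln t).
assert (Hw : forall t, 0 < t -> w l c t = c * (1 - l) * ln t * exp (h t)).
{ intros t Ht. unfold w, Rpower, h.
  assert (exp (c * exp ((1 - l) * ln t) - l * ln t) * exp (l * ln t) = exp (c * exp ((1 - l) * ln t))).
  { rewrite <- exp_plus. f_equal. ring. }
  rewrite <- H. field. apply Rgt_not_eq, exp_pos. }
intros x y Hx Hxy.
assert (H2x : 2 <= x) by (eapply Rle_trans; [apply Rmax_l| exact Hx]).
assert (HMx : exp M <= x) by (eapply Rle_trans; [apply Rmax_r| exact Hx]).
assert (Hh : h x <= h y).
{ apply (mono h (fun t => (c * (1 - l) * exp ((1 - l) * ln t) - l) / t)). lra.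
  - intros t Ht. unfold h. auto_derive. lra. field. lra.
  - intros t Ht. apply Rmult_le_pos; [| left; apply Rinv_0_lt_compat; lra].
    assert (M <= ln t).
    { rewrite <- (ln_exp M). apply ln_mono. apply exp_pos. lra. }
    assert (1 + (1 - l) * ln t <= exp ((1 - l) * ln t)) by apply exp_ineq1_le.
    assert (c * (1 - l) * ((1 - l) * ln t) >= l).
    { assert (c * (1 - l) * ((1 - l) * M) = l) by (unfold M; field; split; lra).
      assert (0 < c * (1 - l) * (1 - l)) by (apply Rmult_lt_0_compat; nra).
      nra. }
    assert (0 < c * (1 - l)) by nra.
    nra. }
rewrite !Hw by lra.
assert (ln x <= ln y) by (apply ln_mono; lra).
assert (0 < ln x) by (rewrite <- ln_1; apply ln_increasing; lra).
assert (exp (h x) <= exp (h y)) by (apply exp_mono; auto).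
assert (0 < exp (h x)) by apply exp_pos.
assert (0 < c * (1 - l)) by nra.
apply Rmult_le_compat. nra. nra. nra. auto.
Qed.

Lemma Int_nonneg x : 0 <= x -> (0 <= Int_part x)%Z.
Proof. intros H. destruct (base_Int_part x) as [_ H2].
assert (-1 < IZR (Int_part x)) by lra.
apply lt_IZR in H0. lia. Qed.

Lemma nfloor_mono x y : 0 <= x -> x <= y -> (Defs.nfloor x <= Defs.nfloor y)%nat.
Proof. intros Hx Hy. unfold Defs.nfloor.
destruct (base_Int_part x) as [H1 H2]. destruct (base_Int_part y) as [H3 H4].
assert (IZR (Int_part x) < IZR (Int_part y) + 1) by lra.
rewrite <- plus_IZR in H. apply lt_IZR in H. lia. Qed.

Lemma nfloor_gt x n : 0 <= x -> (Defs.nfloor x < n)%nat -> x < INR n.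
Proof. intros Hx Hn. unfold Defs.nfloor in Hn.
pose proof (Int_nonneg x Hx).
destruct (base_Int_part x) as [H1 H2].
assert (Z.of_nat n >= Int_part x + 1)%Z by lia.
rewrite INR_IZR_INZ. apply Rle_ge in H1.
assert (IZR (Int_part x + 1) <= IZR (Z.of_nat n)) by (apply IZR_le; lia).
rewrite plus_IZR in H3. lra. Qed.

Lemma sum_split A f x y : 0 <= x -> x <= y ->
  sumA A f y - sumA A f x = sum_n_m (fun n => Defs.ind A n * f (INR n)) (S (Defs.nfloor x)) (Defs.nfloor y).
Proof. intros Hx Hy. unfold sumA.
rewrite (sum_n_m_Chasles _ 1 (Defs.nfloor x) (Defs.nfloor y)). 2: lia. 2: apply nfloor_mono; auto.
unfold plus; simpl. ring. Qed.

Lemma ind_nonneg A n : 0 <= Defs.ind A n.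
Proof. unfold Defs.ind. destruct ClassicalEpsilon.excluded_middle_informative; lra. Qed.

Theorem mainTheorem4 (lam c : R) (A : nat -> Prop) :
  0 < lam < 1 -> 0 < c ->
  is_lim (fun x => sumA A (w lam c) x / exp (c * Rpower x (1 - lam)))
         p_infty 1 ->
  forall eps : R, 0 < eps ->
    exists X : R, forall x : R, X <= x ->
      (piA A (x + Rpower x lam) - piA A x) / (Rpower x lam / ln x)
      <= (exp (c * (1 - lam)) - 1) / (c * (1 - lam)) + eps.
Proof.
intros Hl Hc Hlim eps Heps.
set (K := exp (c * (1 - lam))).
assert (HK : 0 < K) by apply exp_pos.
assert (Hcl : 0 < c * (1 - lam)) by nra.
set (d := eps * (c * (1 - lam)) / (K + 1)).
assert (Hd : 0 < d) by (unfold d; apply Rdiv_lt_0_compat; nra).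
apply is_lim_spec in Hlim. destruct (Hlim (mkposreal d Hd)) as [M HM]. simpl in HM.
destruct (w_mono lam c Hl Hc) as [T [HT2 HT]].
exists (Rmax (Rabs M + 1) T). intros x Hx.
assert (HxT : T <= x) by (eapply Rle_trans; [apply Rmax_r| exact Hx]).
assert (HxM : M < x) by (assert (Rabs M + 1 <= x) by (eapply Rle_trans; [apply Rmax_l| exact Hx]);
  pose proof (Rle_abs M); lra).
set (h := Rpower x lam).
assert (Hh : 0 < h) by (unfold h, Rpower; apply exp_pos).
set (y := x + h).
set (E := fun t => exp (c * Rpower t (1 - lam))).
set (Sm := sumA A (w lam c)).
assert (H1 : Sm y < (1 + d) * E y).
{ assert (M < y) by (unfold y; lra). specialize (HM y H).
  apply Rabs_def2 in HM. destruct HM as [HM _].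
  assert (0 < E y) by apply exp_pos.
  unfold Sm, E. fold E. apply (Rmult_lt_compat_r (E y)) in HM; auto.
  unfold E in *. field_simplify in HM; lra. }
assert (H2 : (1 - d) * E x < Sm x).
{ specialize (HM x HxM).
  apply Rabs_def2 in HM. destruct HM as [_ HM].
  assert (0 < E x) by apply exp_pos.
  apply (Rmult_lt_compat_r (E x)) in HM; auto.
  unfold Sm, E in *. field_simplify in HM; lra. }
assert (H3 : E y <= E x * K).
{ unfold E, K. rewrite <- exp_plus. apply exp_mono.
  pose proof (conc lam x Hl ltac:(lra)). fold h y in H. nra. }
set (P := piA A y - piA A x).
assert (Hx0 : 0 <= x) by lra.
assert (Hxy : x <= y) by (unfold y; lra).
assert (H4 : w lam c x * P <= Sm y - Sm x).
{ unfold P, Sm, piA. rewrite !sum_split by auto.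
  rewrite Rmult_comm.
  replace (sum_n_m (fun n : nat => Defs.ind A n * w lam c (INR n)) (S (Defs.nfloor x)) (Defs.nfloor y))
    with (sum_n_m (fun n : nat => Defs.ind A n * Rmax (w lam c x) (w lam c (INR n))) (S (Defs.nfloor x)) (Defs.nfloor y)).
  2: { apply sum_n_m_ext_loc. intros k Hk. f_equal. apply Rmax_right.
       apply HT; auto. left. apply nfloor_gt; auto; lia. }
  assert (Hm := sum_n_m_mult_r (K := R_Ring) (w lam c x) (fun n => Defs.ind A n * 1) (S (Defs.nfloor x)) (Defs.nfloor y)).
  unfold mult in Hm; simpl in Hm. eapply Rle_trans; [apply Req_le; symmetry; exact Hm|].
  apply sum_n_m_le. intros k. rewrite Rmult_1_r. apply Rmult_le_compat_l. apply ind_nonneg. apply Rmax_l. }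
assert (H5 : w lam c x = c * (1 - lam) * ln x * E x / h).
{ reflexivity. }
assert (Hlnx : 0 < ln x) by (rewrite <- ln_1; apply ln_increasing; lra).
assert (HEx : 0 < E x) by apply exp_pos.
fold h. fold y. fold P.
assert (Hkey : c * (1 - lam) * (P * ln x / h) <= K - 1 + d * (K + 1)).
{ assert (w lam c x * P <= ((1 + d) * K - (1 - d)) * E x) by nra.
  rewrite H5 in H.
  replace (c * (1 - lam) * ln x * E x / h * P) with (c * (1 - lam) * (P * ln x / h) * E x) in H by (field; lra).
  replace (((1 + d) * K - (1 - d)) * E x) with ((K - 1 + d * (K + 1)) * E x) in H by ring.
  apply Rmult_le_reg_r in H; auto. }
assert (d * (K + 1) = eps * (c * (1 - lam))) by (unfold d; field; lra).
replace (P / (h / ln x)) with (P * ln x / h) by (field; lra).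
apply (Rmult_le_reg_l (c * (1 - lam))); auto.
replace (c * (1 - lam) * ((K - 1) / (c * (1 - lam)) + eps)) with (K - 1 + eps * (c * (1 - lam))) by (field; lra).
lra.
Qed.
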